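(* Consider the multi-product pricing model in the context, with a given positive vector $f\in\mathbb{R}^n$, exogenously given $q_{\min}>0$ and $q_{\max}=e^{k}q_{\min}$ for some $k>0$, and suppose the firm restricts prices to $p_i\in[q_{\min}f_i,\,q_{\max}f_i]$ for all $i\in N$ (for every customer type). Let $\bar{\mathcal{R}}$ be the maximum personalized profit subject to these constraints and $\mathcal{R}^f:=\max_{q\in[q_{\min},q_{\max}]}R(qf)$. If A0 and A1 hold, then $\bar{\mathcal{R}}\le (1+k)\,\mathcal{R}^f$.
   Context: Products $N=\{1,\dots,n\}$, customer types $M=\{1,\dots,m\}$, non-negative demand functions $d_{ij}(p)$ for product $i$ and type $j$ at price vector $p\in\mathbb{R}^n_{\ge0}$; type profit $R_j(p)=\sum_i p_id_{ij}(p)$; weights $\theta_j>0$ with $\sum_j\theta_j=1$; $R(p)=\sum_j\theta_jR_j(p)$. In the constrained setting, let $\mathcal{P}:=\{p: q_{\min}f_i\le p_i\le q_{\max}f_i,\ i\in N\}$, $\mathcal{R}^*_j:=\max_{p\in\mathcal{P}}R_j(p)$ and $\bar{\mathcal{R}}:=\sum_j\theta_j\mathcal{R}^*_j$. Assumption A0: for each $j$, the maximum of $R_j$ over $\mathcal{P}$ is attained at a price vector $\bar p^j$ with positive finite components; these are fixed. Define $\delta_{ij}(q):=1$ if $q\le\bar p_{ij}/f_i$ and $0$ otherwise, $G(q):=\sum_j\theta_j\sum_i f_id_{ij}(\bar p^j)\delta_{ij}(q)$ and $H(q):=\sum_j\theta_j\sum_i f_id_{ij}(qf)$. Assumption A1: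 $G(q)\le H(q)$ for all $q\ge0$. *)

(* Defs.v *)
From HB Require Import structures.
From mathcomp Require Import all_boot all_order all_algebra.
From mathcomp Require Import reals sequences exp.
Set Implicit Arguments. Unset Strict Implicit. Unset Printing Implicit Defensive.
Import Order.TTheory GRing.Theory Num.Theory.
Local Open Scope ring_scope.

Section Pricing.
Variables (R : realType) (n m : nat).
(* demand d i j p : demand of product i by customer type j at price vector p *)
Variable d : 'I_n -> 'I_m -> ('I_n -> R) -> R.
Variable theta : 'I_m -> R.

Definition typeProfit (j : 'I_m) (p : 'I_n -> R) : R := \sum_(i < n) p i * d i j p.

Definition totProfit (p : 'I_n -> R) : R := \sum_(j < m) theta j * typeProfit j p.

Definition scalePrice (q : R) (f : 'I_n -> R) : 'I_n -> R := fun i => q * f i.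

Definition inBox (qmin qmax : R) (f : 'I_n -> R) (p : 'I_n -> R) : Prop :=
  forall i, qmin * f i <= p i <= qmax * f i.

Definition delta (f : 'I_n -> R) (pbar : 'I_m -> 'I_n -> R) (i : 'I_n) (j : 'I_m) (q : R) : R :=
  if q <= pbar j i / f i then 1 else 0.

Definition Gfun (f : 'I_n -> R) (pbar : 'I_m -> 'I_n -> R) (q : R) : R :=
  \sum_(j < m) theta j * \sum_(i < n) f i * d i j (pbar j) * delta f pbar i j q.

Definition Hfun (f : 'I_n -> R) (q : R) : R :=
  \sum_(j < m) theta j * \sum_(i < n) f i * d i j (scalePrice q f).
End Pricing.

(* Main.v *)
From HB Require Import structures.
Require Import Defs.
From mathcomp Require Import all_boot all_order all_algebra.
From mathcomp Require Import reals sequences exp ring lra.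
Import Order.TTheory GRing.Theory Num.Theory.
Local Open Scope ring_scope.
Set Implicit Arguments. Unset Strict Implicit.

Section K.
Variable R : realType.

Lemma exmax (I : finType) (P : pred I) (t : I -> R) i0 : P i0 ->
  exists2 j, P j & forall i, P i -> t i <= t j.
Proof.
move=> Pi0; case: (@arg_maxP _ R I i0 P t Pi0) => j Pj Hj.
by exists j.
Qed.

Lemma ln_le_sub1 (x : R) : 0 < x -> ln x <= x - 1.
Proof. move=> x0; have := expR_ge1Dx (ln x); rewrite lnK ?posrE //; lra. Qed.

Definition mu {I : finType} (t : I -> R) := #|[set p : I * I | t p.1 < t p.2]|.

Lemma key_ind (I : finType) (w : I -> R) (a C : R) : 0 < a -> (forall i, 0 <= w i) ->
  forall N (t : I -> R) (b : R), (mu t < N)%N -> a <= b -> (forall i, a <= t i <= b) ->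
  (forall q, a <= q <= b -> q * \sum_(i | q <= t i) w i <= C) ->
  \sum_i w i * t i <= C + C * ln (b / a).
Proof.
move=> a0 w0; elim=> [//|N IH] t b Hmu ab tab Hq.
have C0 : 0 <= C.
  apply: le_trans (Hq a _); last by rewrite lexx ab.
  by apply: mulr_ge0; [exact: ltW | apply: sumr_ge0 => i _].
have lnba : 0 <= ln (b / a) by rewrite ln_ge0 // ler_pdivlMr // mul1r.
have Cl : C <= C + C * ln (b / a) by rewrite lerDl mulr_ge0.
case: (pickP (@predT I)) => [i0 _ | none]; last first.
  rewrite big1; [exact: le_trans C0 Cl | by move=> i; have := none i].
have [iM _ HiM] := @exmax I predT t i0 erefl.
set T := t iM.
have aT : a <= T by case/andP: (tab iM).
have Tb : T <= b by case/andP: (tab iM).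
have T0 : 0 < T by apply: lt_le_trans aT.
case: (pickP (fun k => t k < T)) => [k0 Hk0 | allge]; last first.
  have tT : forall i, t i = T.
    by move=> i; apply/le_anti; rewrite HiM //= leNgt allge.
  apply: le_trans Cl; apply: le_trans (Hq T _); last by rewrite aT Tb.
  have -> : \sum_(i | T <= t i) w i = \sum_i w i by apply: eq_bigl => i; rewrite tT lexx.
  by rewrite mulr_sumr; apply: ler_sum => i _; rewrite tT mulrC.
have [jM HjM HjM'] := @exmax I (fun k => t k < T) t k0 Hk0.
set M := t jM.
have aM : a <= M by case/andP: (tab jM).
have M0 : 0 < M by apply: lt_le_trans aM.
set t' := fun i => if t i < T then t i else M.
have t'M : forall i, t' i <= M by move=> i; rewrite /t'; case: ifP => // /HjM'.
have t't : forall i, t' i <= t i.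
  by move=> i; rewrite /t'; case: ifP => // /negbT; rewrite -leNgt => H; apply: le_trans H; apply: ltW.
have IH' := IH t' M.
have Hmu' : (mu t' < mu t)%N.
  apply: proper_card; apply/properP; split.
    apply/subsetP => -[i j]; rewrite !inE /= /t'.
    case: ifP => Hi; case: ifP => Hj //.
    - move=> H; apply: lt_le_trans Hi _; by rewrite leNgt Hj.
    - by have := HjM' j Hj => H1 H2; move: (le_lt_trans H1 H2); rewrite ltxx.
    - by rewrite ltxx.
  exists (jM, iM); rewrite !inE //= /t' HjM ltxx ltxx.
  by [].
have H1 : \sum_i w i * t' i <= C + C * ln (M / a).
  apply: IH' => //.
  - by rewrite -ltnS; apply: leq_trans Hmu' Hmu.
  - by move=> i; rewrite t'M andbT /t'; case: ifP => _ //; case/andP: (tab i).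
  - move=> q /andP[aq qM]; apply: le_trans (Hq q _); last first.
      by rewrite aq (le_trans qM) // (le_trans (ltW HjM)).
    rewrite ler_pM2l; last by apply: lt_le_trans aq.
    rewrite big_mkcond [X in _ <= X]big_mkcond; apply: ler_sum => i _.
    case: ifP => H; case: ifP => H' //.
    by move: H'; rewrite (le_trans H (t't i)).
have H2 : \sum_i w i * t i = \sum_i w i * t' i + \sum_i w i * (t i - t' i).
  by rewrite -big_split /=; apply: eq_bigr => i _; rewrite -mulrDr addrC subrK.
have H3 : \sum_i w i * (t i - t' i) <= (T - M) * \sum_(i | T <= t i) w i.
  rewrite mulr_sumr [X in _ <= X]big_mkcond; apply: ler_sum => i _ /=.
  rewrite /t'; case: ifP => H.
    by rewrite subrr mulr0 (leNgt T) H /=.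
  have tT : t i = T by apply/le_anti; rewrite HiM //= leNgt H.
  by rewrite tT lexx mulrC.
have H4 : (T - M) * \sum_(i | T <= t i) w i <= C * (1 - M / T).
  have := Hq T _; rewrite aT Tb => /(_ isT) HT.
  have -> : (T - M) * \sum_(i | T <= t i) w i = (1 - M / T) * (T * \sum_(i | T <= t i) w i).
    by field; rewrite gt_eqF.
  rewrite mulrC ler_wpM2r //.
  by rewrite subr_ge0 ler_pdivrMr // mul1r ltW.
have H5 : 1 - M / T <= ln (T / M).
  have := ln_le_sub1 (divr_gt0 M0 T0).
  rewrite -[T / M]invf_div lnV ?posrE ?divr_gt0 //; lra.
have H6 : ln (T / a) = ln (T / M) + ln (M / a).
  rewrite -lnM ?posrE ?divr_gt0 //; congr ln; field; by rewrite ?(gt_eqF M0) ?(gt_eqF a0).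
have H7 : ln (T / a) <= ln (b / a).
  have b0 : 0 < b by apply: lt_le_trans Tb.
  rewrite ler_ln ?posrE ?divr_gt0 //; apply: ler_wpM2r => //; by rewrite invr_ge0 ltW.
rewrite H2.
have H8 : C * (1 - M / T) <= C * ln (T / M) by rewrite ler_wpM2l.
have H9 : C * ln (T / a) <= C * ln (b / a) by rewrite ler_wpM2l.
rewrite H6 mulrDr in H9.
lra.
Qed.

Lemma key (I : finType) (w t : I -> R) (a b C : R) : 0 < a -> (forall i, 0 <= w i) ->
  a <= b -> (forall i, a <= t i <= b) ->
  (forall q, a <= q <= b -> q * \sum_(i | q <= t i) w i <= C) ->
  \sum_i w i * t i <= C + C * ln (b / a).
Proof. by move=> a0 w0; apply: (@key_ind I w a C a0 w0 (mu t).+1). Qed.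
End K.

Unset Implicit Arguments. Set Strict Implicit.
Theorem corollary1 (R : realType) (n m : nat)
    (d : 'I_n -> 'I_m -> ('I_n -> R) -> R) (theta : 'I_m -> R)
    (f : 'I_n -> R) (qmin qmax k : R) (pbar : 'I_m -> 'I_n -> R) (Rf : R) :
  (* non-negative demand at non-negative prices *)
  (forall i j (p : 'I_n -> R), (forall l, 0 <= p l) -> 0 <= d i j p) ->
  (* weights *)
  (forall j, 0 < theta j) -> \sum_(j < m) theta j = 1 ->
  (* positive vector f, price bounds *)
  (forall i, 0 < f i) -> 0 < qmin -> 0 < k -> qmax = expR k * qmin ->
  (* A0: pbar^j is a maximizer of R_j over P with positive components *)
  (forall j, inBox qmin qmax f (pbar j)) ->
  (forall j i, 0 < pbar j i) ->
  (forall j (p : 'I_n -> R), inBox qmin qmax f p ->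
      typeProfit d j p <= typeProfit d j (pbar j)) ->
  (* A1 *)
  (forall q, 0 <= q -> Gfun d theta f pbar q <= Hfun d theta f q) ->
  (* Rf = max_{q in [qmin, qmax]} R(q f) *)
  (exists2 q, qmin <= q <= qmax & totProfit d theta (scalePrice q f) = Rf) ->
  (forall q, qmin <= q <= qmax -> totProfit d theta (scalePrice q f) <= Rf) ->
  (* conclusion: Rbar = sum_j theta_j R*_j <= (1 + k) R^f *)
  \sum_(j < m) theta j * typeProfit d j (pbar j) <= (1 + k) * Rf.
Proof.
move=> dge0 th0 thsum f0 qmin0 k0 qmaxE inb pb0 A0 A1 [qq0 q0b q0E] Rfmax.
pose w := fun p : 'I_m * 'I_n => theta p.1 * (f p.2 * d p.2 p.1 (pbar p.1)).
pose t := fun p : 'I_m * 'I_n => pbar p.1 p.2 / f p.2.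
have E : \sum_(j < m) theta j * typeProfit d j (pbar j) = \sum_p w p * t p.
  rewrite (_ : \sum_p w p * t p = \sum_j \sum_i w (j, i) * t (j, i)); last first.
    by rewrite pair_bigA.
  apply: eq_bigr => j _; rewrite /typeProfit mulr_sumr.
  apply: eq_bigr => i _; rewrite /w /t /=; field; by rewrite gt_eqF.
have ek : 1 <= expR k by apply: le_trans (expR_ge1Dx k); rewrite lerDl ltW.
have qq : qmin <= qmax by rewrite qmaxE ler_peMl // ltW.
have := @key R _ w t qmin qmax Rf qmin0 _ qq _ _.
rewrite qmaxE mulfK ?gt_eqF // expRK.
have -> : Rf + Rf * k = (1 + k) * Rf by ring.
rewrite E; apply.
- move=> [j i] /=; rewrite /w /=; apply: mulr_ge0; first exact: ltW.
  apply: mulr_ge0; first exact: ltW.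
  by apply: dge0 => l; apply: ltW.
- move=> [j i]; rewrite /t /=; have /andP[h1 h2] := inb j i.
  by rewrite ler_pdivlMr // ler_pdivrMr // h1 -qmaxE h2.
- move=> q /andP[qa qb].
  have q0 : 0 <= q by apply: le_trans qa; apply: ltW.
  have G : \sum_(p | q <= t p) w p = Gfun d theta f pbar q.
    rewrite big_mkcond /Gfun.
    rewrite (_ : \sum_p _ = \sum_j \sum_i (if q <= t (j, i) then w (j, i) else 0)); last first.
      by rewrite pair_bigA.
    apply: eq_bigr => j _.
    rewrite mulr_sumr; apply: eq_bigr => i _; rewrite /delta /w /t /=.
    by case: ifP => _; rewrite ?mulr1 ?mulr0.
  rewrite G; apply: le_trans (ler_wpM2l q0 (A1 q q0)) _.
  apply: le_trans (Rfmax q _); last by rewrite qmaxE qa qb.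
  rewrite /Hfun /totProfit mulr_sumr le_eqVlt; apply/orP; left; apply/eqP; apply: eq_bigr => j _.
  rewrite /typeProfit mulrCA mulr_sumr; congr (_ * _); apply: eq_bigr => i _.
  by rewrite /scalePrice mulrA.
Qed.
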